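(* Let $a\in\mathbb{R}$, $q,r>0$ and let $\kappa\ge1$ be an integer. For $k_1\in\mathbb{R}^{\kappa\times 1}$ and $k_2\in\mathbb{R}^{1\times\kappa}$ write $\mathbf{k}:=k_2k_1\in\mathbb{R}$, let $\mathcal{K}:=\{(k_1,k_2): a-\mathbf{k}<0\}$, define $\mathcal{L}(k_1,k_2):=-\frac{q+r\mathbf{k}^2}{2(a-\mathbf{k})}$ on $\mathcal{K}$, and $\underline{\mathcal{L}}:=\inf_{\mathcal{K}}\mathcal{L}$. For $\gamma>0$ let $\mathcal{K}_\gamma:=\{(k_1,k_2)\in\mathcal{K}: \|k_1+k_2^\top\|^2\ge\gamma\}$. Then for every $\gamma>\max(0,4a)$ the constant $$\underline{\mu}:=\frac{r}{4}\min\left\{1,\sqrt{\frac{\gamma^2}{(\gamma-4a)^2}}\right\}$$ is positive and $$\|\nabla\mathcal{L}(k_1,k_2)\|\ \ge\ \sqrt{\underline{\mu}\,(\mathcal{L}(k_1,k_2)-\underline{\mathcal{L}})}\qquad\text{for all }(k_1,k_2)\in\mathcal{K}_\gamma.$$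
   Context: $\mathcal{L}$ is the LQR cost $\mathbb{E}_{x_0\sim\mathcal{N}(0,1)}\int_0^\infty(qx^2+ru^2)dt$ of $\dot x=ax+u$, $u=-k_2k_1x$, overparameterized through the factorization $\mathbf{k}=k_2k_1$. The gradient $\nabla\mathcal{L}$ is with respect to all entries of $(k_1,k_2)$. *)

(* Defs.v *)
From HB Require Import structures.
From mathcomp Require Import all_boot all_order all_algebra.
From mathcomp Require Import all_classical all_reals all_analysis.
Set Implicit Arguments. Unset Strict Implicit. Unset Printing Implicit Defensive.
Import Order.TTheory GRing.Theory Num.Theory.
Import numFieldNormedType.Exports.
Local Open Scope classical_set_scope.
Local Open Scope ring_scope.

Section LQR.
Variables (R : realType) (a q r : R) (n : nat).

Definition kgain (k1 : 'cV[R]_n) (k2 : 'rV[R]_n) : R := (k2 *m k1) 0 0.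

Definition stab (k1 : 'cV[R]_n) (k2 : 'rV[R]_n) : Prop := a - kgain k1 k2 < 0.

(* LQR cost (formula valid on K) *)
Definition Lcost (k1 : 'cV[R]_n) (k2 : 'rV[R]_n) : R :=
  - (q + r * (kgain k1 k2) ^+ 2) / (2 * (a - kgain k1 k2)).

Definition Linf : R :=
  inf [set Lcost p.1 p.2 | p in [set p : 'cV[R]_n * 'rV[R]_n | stab p.1 p.2]].

Definition dL_dk1 (k1 : 'cV[R]_n) (k2 : 'rV[R]_n) (i : 'I_n) : R :=
  derive1 (fun t : R => Lcost (k1 + t *: delta_mx i 0) k2) 0.
Definition dL_dk2 (k1 : 'cV[R]_n) (k2 : 'rV[R]_n) (i : 'I_n) : R :=
  derive1 (fun t : R => Lcost k1 (k2 + t *: delta_mx 0 i)) 0.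

Definition grad_norm (k1 : 'cV[R]_n) (k2 : 'rV[R]_n) : R :=
  Num.sqrt (\sum_(i < n) (dL_dk1 k1 k2 i) ^+ 2 + \sum_(i < n) (dL_dk2 k1 k2 i) ^+ 2).

Definition sumsq (k1 : 'cV[R]_n) (k2 : 'rV[R]_n) : R :=
  \sum_(i < n) (k1 i 0 + k2 0 i) ^+ 2.

Definition stab_gamma (gamma : R) (k1 : 'cV[R]_n) (k2 : 'rV[R]_n) : Prop :=
  stab k1 k2 /\ gamma <= sumsq k1 k2.

End LQR.

(* Main.v *)
Require Import Defs.
From HB Require Import structures.
From mathcomp Require Import all_boot all_order all_algebra.
From mathcomp Require Import all_classical all_reals all_analysis.
From mathcomp Require Import ring lra.
Import Order.TTheory GRing.Theory Num.Theory.
Import numFieldNormedType.Exports.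
Local Open Scope ring_scope.

Lemma foo (R : realType) (a q r k y : R) : a - k != 0 ->
  derive1 (fun t : R => - (q + r * (k + t * y) ^+ 2) / (2 * (a - (k + t * y)))) 0 = 
   ((r * k ^+ 2 - 2 * a * r * k - q) / (2 * (a - k) ^+ 2) * y).
Proof.
move=> ak.
pose F := fun t : R => - (q + r * (k + t * y) ^+ 2).
pose G := fun t : R => 2 * (a - (k + t * y)).
have hF : is_derive (0:R) (1:R) F (- (r * (2 * k * y))).
  apply: is_derive_eq; rewrite /GRing.scale /=; ring.
have hG : is_derive (0:R) (1:R) G (- (2 * y)).
  apply: is_derive_eq; rewrite /GRing.scale /=; ring.
have G0 : G 0 != 0 by rewrite /G mul0r addr0 mulf_neq0 // pnatr_eq0.
have hGV := is_deriveV G0 hG.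
have hM := is_deriveM hF hGV.
rewrite derive1E (_ : (fun t : R => _) = F * (fun t => (G t)^-1)); last first.
  by apply/funext => t.
rewrite derive_val /F /G /=.
rewrite !mul0r !addr0 /GRing.scale /=.
by field; rewrite ak.
Qed.

Lemma hN_lemma (R : realType) (a k m g N : R) : 0 < m -> m <= 1 -> m * (g - 4 * a) <= g ->
  0 < g -> g <= N + 2 * k -> 0 <= N - 2 * k -> 0 <= N + 2 * k -> a < k -> m * (k - a) <= N.
Proof.
move=> m0 m1 mg g0 gN D P ak.
case: (lerP 0 a) => a0.
  have k0 : 0 <= k by apply: (le_trans a0); apply: ltW.
  nra.
nra.
Qed.

Lemma key2 (R : realType) (a q r k u v m N : R) : 0 < u -> 0 < v -> a < k -> 0 <= m ->
  m * (k - a) <= N -> u ^+ 2 = q + r * a ^+ 2 -> v ^+ 2 = r ->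
  r / 4 * m * (- (q + r * k ^+ 2) / (2 * (a - k)) - (r * a + v * u)) <=
  ((r * k ^+ 2 - 2 * a * r * k - q) / (2 * (a - k) ^+ 2)) ^+ 2 * N.
Proof.
move=> u0 v0 ak m0 hN hu hv.
have eq : q = u ^+ 2 - v ^+ 2 * a ^+ 2 by rewrite hu hv; ring.
rewrite eq -hv.
have s0 : 0 < k - a by rewrite subr_gt0.
have sn : k - a != 0 by rewrite gt_eqF.
have sn' : a - k != 0 by rewrite -opprB oppr_eq0.
have N0 : 0 <= N by apply: le_trans hN; apply: mulr_ge0 => //; apply: ltW.
have -> : v ^+ 2 / 4 * m * (- (u ^+ 2 - v ^+ 2 * a ^+ 2 + v ^+ 2 * k ^+ 2) / (2 * (a - k)) - (v ^+ 2 * a + v * u))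
   = (u - v * (k - a)) ^+ 2 * (v ^+ 2 * m * (k - a) ^+ 3) / (8 * (k - a) ^+ 4).
  by field; rewrite sn sn'.
have -> : ((v ^+ 2 * k ^+ 2 - 2 * a * v ^+ 2 * k - (u ^+ 2 - v ^+ 2 * a ^+ 2)) / (2 * (a - k) ^+ 2)) ^+ 2 * N
   = (u - v * (k - a)) ^+ 2 * (2 * (v * (k - a) + u) ^+ 2 * N) / (8 * (k - a) ^+ 4).
  by field; rewrite sn sn'.
rewrite ler_pM2r; last by rewrite invr_gt0 mulr_gt0 // exprn_gt0.
apply: ler_wpM2l; first exact: sqr_ge0.
have h1 : v ^+ 2 * m * (k - a) ^+ 3 <= v ^+ 2 * (k - a) ^+ 2 * N.
  have hx : 0 <= v ^+ 2 * (k - a) ^+ 2 by rewrite mulr_ge0 // sqr_ge0.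
  have := ler_wpM2l hx hN.
  by rewrite (_ : v ^+ 2 * m * (k - a) ^+ 3 = v ^+ 2 * (k - a) ^+ 2 * (m * (k - a))) //; ring.
apply: (le_trans h1); apply: ler_wpM2r => //.
have vs : 0 < v * (k - a) by apply: mulr_gt0.
rewrite -exprMn.
nra.
Qed.

Lemma Lmin_le (R : realType) (a q r k : R) : 0 < q -> 0 < r -> a - k < 0 ->
  r * a + Num.sqrt r * Num.sqrt (q + r * a ^+ 2) <= - (q + r * k ^+ 2) / (2 * (a - k)).
Proof.
move=> q0 r0 ak.
have c0 : 0 <= q + r * a ^+ 2 by apply: addr_ge0; [exact: ltW | apply: mulr_ge0; [exact: ltW | exact: sqr_ge0]].
have hu : Num.sqrt (q + r * a ^+ 2) ^+ 2 = q + r * a ^+ 2 by rewrite sqr_sqrtr.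
have hv : Num.sqrt r ^+ 2 = r by rewrite sqr_sqrtr // ltW.
move: hu hv; set u := Num.sqrt _; set v := Num.sqrt r => hu hv; clearbody u v.
have eq : q = u ^+ 2 - v ^+ 2 * a ^+ 2 by rewrite hu hv; ring.
rewrite eq -hv.
have s0 : 0 < k - a by rewrite -opprB oppr_gt0.
have sn' : a - k != 0 by rewrite lt_eqF.
have -> : - (u ^+ 2 - v ^+ 2 * a ^+ 2 + v ^+ 2 * k ^+ 2) / (2 * (a - k))
   = (u ^+ 2 - v ^+ 2 * a ^+ 2 + v ^+ 2 * k ^+ 2) / (2 * (k - a)).
  by field; rewrite sn' gt_eqF.
rewrite ler_pdivlMr; last by rewrite mulr_gt0.
rewrite -subr_ge0.
rewrite (_ : _ - _ = (u - v * (k - a)) ^+ 2); first exact: sqr_ge0.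
ring.
Qed.

Lemma kgain_d1 (R : realType) n (k1 : 'cV[R]_n) (k2 : 'rV[R]_n) i (t : R) :
  kgain (k1 + t *: delta_mx i 0) k2 = kgain k1 k2 + t * k2 0 i.
Proof. by rewrite /kgain mulmxDr -scalemxAr -colE !mxE. Qed.

Lemma kgain_d2 (R : realType) n (k1 : 'cV[R]_n) (k2 : 'rV[R]_n) i (t : R) :
  kgain k1 (k2 + t *: delta_mx 0 i) = kgain k1 k2 + t * k1 i 0.
Proof. by rewrite /kgain mulmxDl -scalemxAl -rowE !mxE. Qed.

Lemma kgain_sum (R : realType) n (k1 : 'cV[R]_n) (k2 : 'rV[R]_n) :
  kgain k1 k2 = \sum_i k1 i 0 * k2 0 i.
Proof. by rewrite /kgain mxE; apply: eq_bigr => i _; rewrite mulrC. Qed.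

Lemma dL1 (R : realType) (a q r : R) n (k1 : 'cV[R]_n) (k2 : 'rV[R]_n) i :
  stab a k1 k2 -> dL_dk1 a q r k1 k2 i =
  (r * kgain k1 k2 ^+ 2 - 2 * a * r * kgain k1 k2 - q) / (2 * (a - kgain k1 k2) ^+ 2) * k2 0 i.
Proof.
move=> hs; rewrite /dL_dk1.
rewrite (_ : (fun t : R => _) = (fun t : R => - (q + r * (kgain k1 k2 + t * k2 0 i) ^+ 2)
   / (2 * (a - (kgain k1 k2 + t * k2 0 i))))); last first.
  by apply/funext => t; rewrite /Lcost kgain_d1.
by apply: foo; rewrite lt_eqF.
Qed.

Lemma dL2 (R : realType) (a q r : R) n (k1 : 'cV[R]_n) (k2 : 'rV[R]_n) i :
  stab a k1 k2 -> dL_dk2 a q r k1 k2 i =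
  (r * kgain k1 k2 ^+ 2 - 2 * a * r * kgain k1 k2 - q) / (2 * (a - kgain k1 k2) ^+ 2) * k1 i 0.
Proof.
move=> hs; rewrite /dL_dk2.
rewrite (_ : (fun t : R => _) = (fun t : R => - (q + r * (kgain k1 k2 + t * k1 i 0) ^+ 2)
   / (2 * (a - (kgain k1 k2 + t * k1 i 0))))); last first.
  by apply/funext => t; rewrite /Lcost kgain_d2.
by apply: foo; rewrite lt_eqF.
Qed.

Theorem corollary1 (R : realType) (a q r : R) (n : nat) (gamma : R) :
  0 < q -> 0 < r -> (1 <= n)%N -> Num.max 0 (4 * a) < gamma ->
  let mu := r / 4 * Num.min 1 (Num.sqrt (gamma ^+ 2 / (gamma - 4 * a) ^+ 2)) in
  0 < mu /\
  forall (k1 : 'cV[R]_n) (k2 : 'rV[R]_n),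
    stab_gamma a gamma k1 k2 ->
    Num.sqrt (mu * (Lcost a q r k1 k2 - Linf a q r n)) <= grad_norm a q r k1 k2.
Proof.
move=> q0 r0 n1 hg mu.
move: hg; rewrite gt_max => /andP [g0 g4].
have ga0 : 0 < gamma - 4 * a by rewrite subr_gt0.
have hsq : Num.sqrt (gamma ^+ 2 / (gamma - 4 * a) ^+ 2) = gamma / (gamma - 4 * a).
  by rewrite -expr_div_n sqrtr_sqr ger0_norm // divr_ge0 // ltW.
pose m := Num.min 1 (gamma / (gamma - 4 * a)).
have mE : mu = r / 4 * m by rewrite /mu hsq.
have m0 : 0 < m by rewrite /m lt_min ltr01 divr_gt0.
have m1 : m <= 1 by rewrite /m ge_min lexx.
have m2 : m * (gamma - 4 * a) <= gamma.
  by rewrite -ler_pdivlMr // /m ge_min lexx orbT.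
have mu0 : 0 < mu by rewrite mE mulr_gt0 // divr_gt0.
split => // k1 k2 [hs hgam].
pose Sx := \sum_(i < n) k1 i 0 ^+ 2.
pose Sy := \sum_(i < n) k2 0 i ^+ 2.
have hk := @kgain_sum _ _ k1 k2.
have hS : sumsq k1 k2 = Sx + Sy + 2 * kgain k1 k2.
  rewrite /sumsq hk mulr_sumr /Sx /Sy -!big_split /=.
  by apply: eq_bigr => i _; ring.
have hD : 0 <= Sx + Sy - 2 * kgain k1 k2.
  have -> : Sx + Sy - 2 * kgain k1 k2 = \sum_(i < n) (k1 i 0 - k2 0 i) ^+ 2.
    rewrite hk mulr_sumr /Sx /Sy -sumrN -!big_split /=.
    by apply: eq_bigr => i _; ring.
  by apply: sumr_ge0 => i _; apply: sqr_ge0.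
have hP : 0 <= Sx + Sy + 2 * kgain k1 k2.
  by rewrite -hS /sumsq; apply: sumr_ge0 => i _; apply: sqr_ge0.
pose Ld := (r * kgain k1 k2 ^+ 2 - 2 * a * r * kgain k1 k2 - q) / (2 * (a - kgain k1 k2) ^+ 2).
have hgrad : grad_norm a q r k1 k2 = Num.sqrt (Ld ^+ 2 * (Sx + Sy)).
  rewrite /grad_norm; congr (Num.sqrt _); rewrite mulrDr [in RHS]addrC; congr (_ + _).
    by rewrite /Sy mulr_sumr; apply: eq_bigr => i _; rewrite dL1 // exprMn.
  by rewrite /Sx mulr_sumr; apply: eq_bigr => i _; rewrite dL2 // exprMn.
have hinf : r * a + Num.sqrt r * Num.sqrt (q + r * a ^+ 2) <= Linf a q r n.
  apply: lb_le_inf.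
    by exists (Lcost a q r k1 k2); exists (k1, k2).
  by move=> _ [p hp <-]; apply: Lmin_le.
rewrite hgrad; apply: ler_wsqrtr.
apply: (@le_trans _ _ (mu * (Lcost a q r k1 k2 - (r * a + Num.sqrt r * Num.sqrt (q + r * a ^+ 2))))).
  by apply: ler_wpM2l; [apply: ltW | rewrite lerB].
have ak : a < kgain k1 k2 by rewrite -subr_lt0.
have hN : m * (kgain k1 k2 - a) <= Sx + Sy.
  apply: (@hN_lemma _ _ _ _ _ _ m0 m1 m2 g0) => //; by rewrite -hS.
have c0 : 0 < q + r * a ^+ 2 by have := mulr_ge0 (ltW r0) (sqr_ge0 a); lra.
rewrite mE /Lcost /Ld.
apply: key2 => //.
- by rewrite sqrtr_gt0.
- by rewrite sqrtr_gt0.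
- by apply: ltW.
- by rewrite sqr_sqrtr // ltW.
- by rewrite sqr_sqrtr // ltW.
Qed.
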